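(* Under the standing setup below, $D_{n-1} \ge F_n$ for all $n \in \mathbb{N}_0$, and consequently, as $n \to +\infty$, \[ a_{-n} u_n + a_{-n+1} u_{n+1} = \frac{\pi}{4} + O\!\left( \Phi^{-2n} \right), \] where $\Phi = \frac{1+\sqrt5}{2}$; i.e. the rational sequence $(a_{-n}u_n + a_{-n+1}u_{n+1})_n$ converges to $\pi/4$ at least as fast as a geometric sequence of ratio $1/\Phi^2$.
   Context: Standing setup: $a_0, a_1 \in \mathbb{Z}$ and $u_0 > u_1 > 0$ are rational numbers with $a_0 \arctan u_0 + a_1 \arctan u_1 = \pi/4$. Let $\alpha := \arctan u_0 / \arctan u_1$ (which is $>1$ and irrational), with infinite simple continued fraction expansion $\alpha = [q_0; q_1, q_2, \dots]$, $q_i \in \mathbb{N}$. The numbers $u_n$ ($n \in \mathbb{N}_0$) are the positive reals with the given $u_0,u_1$ and $\arctan u_n = q_n \arctan u_{n+1} + \arctan u_{n+2}$ for all $n \in \mathbb{N}_0$. The integers $a_{-n}$ for $n \geq 1$ are defined recursively by $a_{-n-1} := q_n a_{-n} + a_{-n+1}$ for all $n \in \mathbb{N}_0$. The sequence $D_k$ ($k \ge -2$) is defined by $D_{-2}=1$, $D_{-1}=0$, $D_k = q_k D_{k-1} + D_{k-2}$ for $k \in \mathbb{N}_0$ (denominators of the convergents of $\alpha$). $(F_n)_{n\ge0}$ is the Fibonacci sequence $F_0=0$, $F_1=1$, $F_{n+2}=F_{n+1}+F_n$. *)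

(* Defs.v *)
From Stdlib Require Import Reals Lra ZArith QArith Qreals.
Open Scope R_scope.

Fixpoint cf_x (alpha : R) (n : nat) : R :=
  match n with
  | O => alpha
  | S m => / (cf_x alpha m - IZR (Int_part (cf_x alpha m)))
  end.

Definition cf_q (alpha : R) (n : nat) : nat := Z.to_nat (Int_part (cf_x alpha n)).

(* denD alpha j = D_{j-2}: D_{-2}=1, D_{-1}=0, D_k = q_k D_{k-1} + D_{k-2}. *)
Fixpoint denD (alpha : R) (j : nat) : nat :=
  match j with
  | O => 1%nat
  | S O => 0%nat
  | S ((S k) as j') => (cf_q alpha k * denD alpha j' + denD alpha k)%nat
  end.

(* coefA alpha a0 a1 j = a_{-j+1}: coefA 0 = a_1, coefA 1 = a_0,
   a_{-n-1} = q_n a_{-n} + a_{-n+1}. *)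
Fixpoint coefA (alpha : R) (a0 a1 : Z) (j : nat) : Z :=
  match j with
  | O => a1
  | S O => a0
  | S ((S k) as j') => (Z.of_nat (cf_q alpha k) * coefA alpha a0 a1 j' + coefA alpha a0 a1 k)%Z
  end.

Fixpoint fib (n : nat) : nat :=
  match n with
  | O => 0%nat
  | S O => 1%nat
  | S ((S k) as m) => (fib m + fib k)%nat
  end.

Definition Phi : R := (1 + sqrt 5) / 2.

Definition irrational (x : R) : Prop :=
  ~ exists p q : Z, q <> 0%Z /\ x = IZR p / IZR q.

(* Main.v *)
Require Import Defs.
From Stdlib Require Import Reals Lra Lia ZArith QArith Qreals.
Open Scope R_scope.

Lemma irr_x alpha : irrational alpha -> forall k, irrational (cf_x alpha k).
Proof.
  intros Ha k; induction k as [|k IHk]; simpl; auto.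
  intros [p [q [Hq E]]]. apply IHk.
  set (x := cf_x alpha k) in *. set (I := Int_part x) in *.
  destruct (Req_dec (x - IZR I) 0) as [H0|H0].
  - exists I, 1%Z. split; [lia|]. unfold Rdiv; rewrite Rinv_1. lra.
  - assert (Hp : p <> 0%Z).
    { intro Hp0; subst p. apply (Rinv_neq_0_compat _ H0). rewrite E. unfold Rdiv; ring. }
    assert (Hq' := not_0_IZR _ Hq). assert (Hp' := not_0_IZR _ Hp).
    assert (E2 : x - IZR I = IZR q / IZR p).
    { rewrite <- (Rinv_inv (x - IZR I)). rewrite E. field. auto. }
    exists (I * p + q)%Z, p. split; auto.
    rewrite plus_IZR, mult_IZR. replace x with (IZR I + IZR q / IZR p) by lra.
    field. auto.
Qed.

Lemma frac_pos alpha k : irrational alpha ->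
  0 < cf_x alpha k - IZR (Int_part (cf_x alpha k)) < 1.
Proof.
  intros Ha. assert (Hi := irr_x alpha Ha k).
  destruct (base_Int_part (cf_x alpha k)) as [b1 b2].
  split; [|lra].
  destruct (Req_dec (cf_x alpha k - IZR (Int_part (cf_x alpha k))) 0) as [H0|H0]; [|lra].
  exfalso. apply Hi. exists (Int_part (cf_x alpha k)), 1%Z. split; [lia|].
  unfold Rdiv; rewrite Rinv_1. lra.
Qed.

Lemma q_ge1 alpha k : irrational alpha -> (1 <= cf_q alpha (S k))%nat.
Proof.
  intros Ha. unfold cf_q. simpl.
  assert (Hf := frac_pos alpha k Ha).
  set (f := cf_x alpha k - IZR (Int_part (cf_x alpha k))) in *.
  assert (Hy : 1 < / f).
  { apply (Rmult_lt_reg_l f); [lra|]. rewrite Rinv_r; lra. }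
  destruct (base_Int_part (/ f)) as [b1 b2].
  assert (0 < IZR (Int_part (/ f))) by lra.
  apply lt_IZR in H. lia.
Qed.

Lemma fib_le alpha : irrational alpha -> forall n, (fib n <= denD alpha (S n))%nat.
Proof.
  intros Ha.
  assert (forall n, (fib n <= denD alpha (S n))%nat /\ (fib (S n) <= denD alpha (S (S n)))%nat).
  { induction n as [|n [IH1 IH2]].
    - simpl. lia.
    - split; auto.
      change (fib (S (S n))) with (fib (S n) + fib n)%nat.
      change (denD alpha (S (S (S n)))) with
        (cf_q alpha (S n) * denD alpha (S (S n)) + denD alpha (S n))%nat.
      assert (H1 := q_ge1 alpha n Ha). nia. }
  intro n; apply H.
Qed.
Lemma tan_err t : 0 <= t <= 1 -> Rabs (tan t - t) <= t^3.
Proof.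
  intros [H0 H1].
  assert (HP := PI2_1).
  destruct (sin_bound t 0 ltac:(lra) ltac:(lra)) as [s1 s2].
  destruct (cos_bound t 0 ltac:(lra) ltac:(lra)) as [c1 c2].
  unfold sin_approx, cos_approx, sin_term, cos_term in *. simpl in *.
  unfold tan. set (s := sin t) in *. set (c := cos t) in *.
  assert (Hc : 1/2 <= c) by nra.
  assert (Hc1 : c <= 1) by nra.
  set (y := s / c).
  assert (Hy : y * c = s) by (unfold y; field; lra).
  apply Rabs_le. split.
  - assert (s - t*c >= - (t^3)/6) by nra. assert ((y - t)*c = s - t*c) by nra.
    destruct (Rle_or_lt 0 (y - t)); [nra|]. assert ((y-t)*(c-1/2) <= 0) by nra. nra.
  - assert (s - t*c <= t^3/2) by nra. assert ((y - t)*c = s - t*c) by nra.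
    destruct (Rle_or_lt (y - t) 0); [nra|]. assert ((y-t)*(c-1/2) >= 0) by nra. nra.
Qed.

Theorem mainTheorem9 (a0 a1 : Z) (u0 u1 : Q) (u : nat -> R)
  (Hu1pos : (0 < u1)%Q) (Hu10 : (u1 < u0)%Q)
  (Hmachin : IZR a0 * atan (Q2R u0) + IZR a1 * atan (Q2R u1) = PI / 4)
  (Hirr : irrational (atan (Q2R u0) / atan (Q2R u1)))
  (Hu0 : u 0%nat = Q2R u0) (Hu1 : u 1%nat = Q2R u1)
  (Hupos : forall n, 0 < u n)
  (Hurec : forall n, atan (u n) =
      INR (cf_q (atan (Q2R u0) / atan (Q2R u1)) n) * atan (u (S n)) + atan (u (S (S n)))) :
  let alpha := atan (Q2R u0) / atan (Q2R u1) in
  (forall n : nat, (fib n <= denD alpha (S n))%nat) /\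
  exists C : R, exists N : nat, forall n : nat, (N <= n)%nat ->
    Rabs (IZR (coefA alpha a0 a1 (S n)) * u n + IZR (coefA alpha a0 a1 n) * u (S n) - PI / 4)
      <= C * / (Phi ^ (2 * n)).
Proof.
  intros alpha. split; [apply fib_le; exact Hirr|].
  set (th := fun n => atan (u n)).
  assert (thpos : forall n, 0 < th n).
  { intro n. unfold th. rewrite <- atan_0. apply atan_increasing. apply Hupos. }
  set (A := fun n => IZR (coefA alpha a0 a1 (S n))).
  set (B := fun n => IZR (coefA alpha a0 a1 n)).
  set (q := fun n => INR (cf_q alpha n)).
  assert (Hrec : forall n, th n = q n * th (S n) + th (S (S n))) by (intro n; apply Hurec).
  assert (HA : forall n, A (S n) = q n * A n + B n).
  { intro n. unfold A, B, q.
    change (coefA alpha a0 a1 (S (S n))) with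
      (Z.of_nat (cf_q alpha n) * coefA alpha a0 a1 (S n) + coefA alpha a0 a1 n)%Z.
    rewrite plus_IZR, mult_IZR, <- INR_IZR_INZ. reflexivity. }
  assert (HB : forall n, B (S n) = A n) by reflexivity.
  assert (qnn : forall n, 0 <= q n) by (intro; apply pos_INR).
  assert (Hinv : forall n, A n * th n + B n * th (S n) = PI / 4).
  { induction n as [|n IH].
    - unfold A, B, th. simpl. rewrite Hu0, Hu1. lra.
    - rewrite HA, HB, <- IH, (Hrec n). ring. }
  set (M := fun n => Rabs (A n) * th n + Rabs (B n) * th (S n)).
  assert (HM : forall n, M n <= M 0%nat).
  { induction n as [|n IH]; [lra|].
    apply Rle_trans with (2 := IH). unfold M. rewrite HA, HB.
    assert (Rabs (q n * A n + B n) <= q n * Rabs (A n) + Rabs (B n)).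
    { eapply Rle_trans; [apply Rabs_triang|]. rewrite Rabs_mult, (Rabs_right (q n)) by (apply Rle_ge; apply qnn). lra. }
    assert (H2 := thpos (S n)). assert (H3 := thpos (S (S n))).
    rewrite (Hrec n).
    assert (Rabs (q n * A n + B n) * th (S n) <= (q n * Rabs (A n) + Rabs (B n)) * th (S n))
      by (apply Rmult_le_compat_r; lra).
    nra. }
  assert (Hs5 : 0 <= sqrt 5) by apply sqrt_pos.
  assert (Hs5' : sqrt 5 * sqrt 5 = 5) by (apply sqrt_sqrt; lra).
  assert (HPhi : 1 < Phi) by (unfold Phi; nra).
  assert (HPhi2 : Phi * Phi = Phi + 1) by (unfold Phi; nra).
  set (r := / Phi).
  assert (HrP : r * Phi = 1) by (unfold r; field; lra).
  assert (Hr0 : 0 < r) by (unfold r; apply Rinv_0_lt_compat; lra).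
  assert (Hr2 : r * r = 1 - r).
  { assert (r * r * (Phi * Phi) = 1) by nra. assert (r * r * Phi = r) by nra. nra. }
  set (E := fun n => th n + r * th (S n)).
  assert (HE : forall m, E (S (S m)) <= r * E (S m)).
  { intro m. unfold E.
    assert (Hq1 : 1 <= q (S m)).
    { unfold q. replace 1 with (INR 1) by reflexivity. apply le_INR. apply q_ge1. exact Hirr. }
    assert (H1 := Hrec (S m)). assert (H2 := thpos (S (S m))).
    assert (th (S (S (S m))) <= th (S m) - th (S (S m))) by nra.
    assert (r * th (S (S (S m))) <= r * (th (S m) - th (S (S m)))) by (apply Rmult_le_compat_l; lra).
    assert (r * r * th (S (S m)) = (1 - r) * th (S (S m))) by (rewrite Hr2; ring).
    nra. }
  assert (HEm : forall m, E (S m) <= r ^ m * E 1%nat).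
  { induction m as [|m IH]; [simpl; lra|].
    eapply Rle_trans; [apply HE|]. simpl.
    replace (r * r ^ m * E 1%nat) with (r * (r ^ m * E 1%nat)) by ring.
    apply Rmult_le_compat_l; lra. }
  assert (Hthm : forall m, th (S m) <= r ^ m * E 1%nat).
  { intro m. eapply Rle_trans; [|apply HEm]. unfold E. assert (H := thpos (S (S m))). nra. }
  assert (Hdec : forall m, th (S (S m)) <= th (S m)).
  { intro m. assert (Hq1 : 1 <= q (S m)).
    { unfold q. replace 1 with (INR 1) by reflexivity. apply le_INR. apply q_ge1. exact Hirr. }
    assert (H1 := Hrec (S m)). assert (H2 := thpos (S (S m))). assert (H3 := thpos (S (S (S m)))).
    nra. }
  assert (HE1 : 0 < E 1%nat) by (unfold E; assert (H := thpos 1%nat); assert (H' := thpos 2%nat); nra).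
  assert (Hr1 : r < 1) by nra.
  destruct (pow_lt_1_zero r ltac:(rewrite Rabs_right; lra) (/ E 1%nat)
     ltac:(apply Rinv_0_lt_compat; lra)) as [N0 HN0].
  assert (Htan : forall n, th n <= 1 -> Rabs (u n - th n) <= th n ^ 3).
  { intros n Hn. assert (H := tan_err (th n) ltac:(split; [apply Rlt_le, thpos|exact Hn])).
    unfold th at 1 in H. rewrite tan_atan in H. exact H. }
  set (M0 := M 0%nat).
  assert (HM0 : 0 <= M0) by (unfold M0, M; assert (H := thpos 0%nat); assert (H' := thpos 1%nat);
     assert (Rabs (A 0%nat) >= 0) by (apply Rle_ge, Rabs_pos);
     assert (Rabs (B 0%nat) >= 0) by (apply Rle_ge, Rabs_pos); nra).
  exists (2 * M0 * (E 1%nat * E 1%nat) * (Phi * Phi)), (S N0).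
  intros n Hn. destruct n as [|m]; [lia|].
  assert (Hm : (m >= N0)%nat) by lia.
  assert (Hrm := HN0 m Hm). rewrite Rabs_right in Hrm by (apply Rle_ge, pow_le; lra).
  assert (Hrm0 : 0 <= r ^ m) by (apply pow_le; lra).
  assert (Hb := Hthm m).
  assert (Hlt : r ^ m * E 1%nat < 1).
  { apply (Rmult_lt_compat_r (E 1%nat)) in Hrm; [|lra]. rewrite Rinv_l in Hrm; lra. }
  assert (Hd := Hdec m).
  assert (t1 := thpos (S m)). assert (t2 := thpos (S (S m))).
  assert (Ht1 := Htan (S m) ltac:(lra)). assert (Ht2 := Htan (S (S m)) ltac:(lra)).
  assert (HMm : M (S m) <= M0) by apply HM. unfold M in HMm.
  change (IZR (coefA alpha a0 a1 (S (S m)))) with (A (S m)).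
  change (IZR (coefA alpha a0 a1 (S m))) with (B (S m)).
  rewrite <- (Hinv (S m)).
  replace (A (S m) * u (S m) + B (S m) * u (S (S m)) - (A (S m) * th (S m) + B (S m) * th (S (S m))))
    with (A (S m) * (u (S m) - th (S m)) + B (S m) * (u (S (S m)) - th (S (S m)))) by ring.
  rewrite <- pow_inv. fold r.
  replace (2 * S m)%nat with (m + m + 2)%nat by lia. rewrite !pow_add.
  set (a := Rabs (A (S m))) in *. set (b := Rabs (B (S m))) in *.
  assert (Ha : 0 <= a) by apply Rabs_pos. assert (Hb' : 0 <= b) by apply Rabs_pos.
  set (t := th (S m)) in *. set (t' := th (S (S m))) in *.
  assert (Hx : Rabs (A (S m) * (u (S m) - t) + B (S m) * (u (S (S m)) - t')) <= a * t ^ 3 + b * t' ^ 3).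
  { eapply Rle_trans; [apply Rabs_triang|]. rewrite !Rabs_mult. fold a b.
    apply Rplus_le_compat; apply Rmult_le_compat_l; auto. }
  eapply Rle_trans; [exact Hx|].
  assert (a * t ^ 3 <= M0 * (t * t)).
  { assert (0 <= b * t') by (apply Rmult_le_pos; lra). replace (a * t ^ 3) with ((a * t) * (t * t)) by ring. apply Rmult_le_compat_r; [nra|]. lra. }
  assert (b * t' ^ 3 <= M0 * (t * t)).
  { replace (b * t' ^ 3) with ((b * t') * (t' * t')) by ring.
    apply Rle_trans with (M0 * (t' * t')); [apply Rmult_le_compat_r; nra|].
    apply Rmult_le_compat_l; nra. }
  set (R0 := r ^ m) in *. set (e := E 1%nat) in *.
  assert (t * t <= (R0 * e) * (R0 * e)) by nra.
  assert (Hpr : r ^ 2 * (Phi * Phi) = 1) by (simpl; nra).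
  replace (2 * M0 * (e * e) * (Phi * Phi) * (R0 * R0 * r ^ 2))
    with (2 * M0 * ((R0 * e) * (R0 * e)) * (r ^ 2 * (Phi * Phi))) by ring.
  rewrite Hpr. nra.
Qed.
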